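(* Let $G=(\mathcal{V},\mathcal{E})$ be a hypergraph, $P$ a pmf on $\mathcal{V}$, and $L\ge1$ an integer. If the subhypergraph $G_P$ of $G$ induced by $P$ is complete multipartite, then $$\max_{\ell\in[L+1]}\frac1\ell\,\theta^{(\ell)}_{L+1}(G,P)=\frac{1}{L+1}I_{L+1}(G,P).$$
   Context: Notation: $[j]=\{1,\dots,j\}$, $[i:j]=\{i,\dots,j\}$; $\log$ base 2. A hypergraph $G=(\mathcal{V},\mathcal{E})$ has finite $\mathcal{V}$ and $\mathcal{E}\subseteq2^{\mathcal{V}}$ with edges of cardinality $\ge2$. An independent set is a vertex subset none of whose subsets is an edge; a hypergraph is complete multipartite if its vertex set has a partition $\{\mathcal{I}_j\}$ into independent sets such that every vertex subset is either an edge or contained in some $\mathcal{I}_j$. $G_P=(\mathcal{V}_P,\mathcal{E}_P)$ with $\mathcal{V}_P=\mathrm{supp}(P)$ and $\mathcal{E}_P$ the edges of $G$ contained in $\mathcal{V}_P$. For $v_{[k]}\in\mathcal{V}^k$, $\sigma(v_{[k]})=\{v_1,\dots,v_k\}$, $P(v_S)=\prod_{j\in S}P(v_j)$. $I_{L+1}(G,P):=-\frac1L\log\sum_{v_{[L+1]}:\sigma(v_{[L+1]})\notin\mathcal{E}}P(v_{[L+1]})$, $\theta^{(L+1)}_{L+1}(G,P):=I_{L+1}(G,P)$, and for $\ell\in[L]$, $\theta^{(\ell)}_{L+1}(G,P):=2I_{L+1}(G,P)+\frac1L\log\sum_{v_{[\ell]}}P(v_{[\ell]})\Big[\sum_{v_{[\ell+1:L+1]}:\sigma(v_{[L+1]})\notin\mathcal{E}}P(v_{[\ell+1:L+1]})\Big]^2$.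 *)

(* Defs.v *)
From Stdlib Require Import Reals.
From mathcomp Require Import all_boot.
Set Implicit Arguments. Unset Strict Implicit. Unset Printing Implicit Defensive.

Open Scope R_scope.

Definition log2 (x : R) : R := ln x / ln 2.

Section Hyper.
Variable V : finType.

Definition is_hypergraph (E : {set {set V}}) : Prop :=
  forall e, e \in E -> (2 <= #|e|)%N.

Definition is_pmf (P : V -> R) : Prop :=
  (forall v, 0 <= P v) /\ \big[Rplus/0]_(v : V) P v = 1.

Definition supp (P : V -> R) : {set V} :=
  [set v | if Rlt_dec 0 (P v) then true else false].

Definition induced_edges (E : {set {set V}}) (W : {set V}) : {set {set V}} :=
  [set e in E | e \subset W].

Definition independent (E : {set {set V}}) (S : {set V}) : Prop :=
  forall A : {set V}, A \subset S -> A \notin E.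

Definition complete_multipartite (W : {set V}) (E : {set {set V}}) : Prop :=
  exists Parts : {set {set V}},
    partition Parts W /\
    (forall I, I \in Parts -> independent E I) /\
    (forall A : {set V}, A \subset W ->
       A \in E \/ exists I, I \in Parts /\ A \subset I).

Definition sigma (s : seq V) : {set V} := [set x in s].

Definition prodP (P : V -> R) (s : seq V) : R := \big[Rmult/1]_(x <- s) P x.

Definition I_L1 (E : {set {set V}}) (P : V -> R) (L : nat) : R :=
  - (1 / INR L) *
    log2 (\big[Rplus/0]_(t : (L.+1).-tuple V | sigma t \notin E) prodP P t).

Definition theta (E : {set {set V}}) (P : V -> R) (L l : nat) : R :=
  if (l == L.+1)%N then I_L1 E P L
  else 2 * I_L1 E P L + (1 / INR L) *
    log2 (\big[Rplus/0]_(t1 : l.-tuple V)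
            (prodP P t1 *
             (\big[Rplus/0]_(t2 : (L.+1 - l).-tuple V | sigma (t1 ++ t2) \notin E)
                 prodP P t2) ^ 2)).

Definition max_over_L1 (L : nat) (f : nat -> R) : R :=
  \big[Rmax/f 1%nat]_(1 <= l < L.+2) f l.

End Hyper.

(* Main.v *)
Require Import Defs.
From HB Require Import structures.
From Stdlib Require Import Reals Lra Classical.
From mathcomp Require Import all_boot.
Import Defs.
Set Implicit Arguments. Unset Strict Implicit.
Open Scope R_scope.

Lemma ln_le' x y : 0 < x -> x <= y -> ln x <= ln y.
Proof. move=> hx [h|->]; [left; exact: ln_increasing | right; done]. Qed.
Lemma exp_le' x y : x <= y -> exp x <= exp y.
Proof. move=> [h|->]; [left; exact: exp_increasing | right; done]. Qed.
Lemma ln2_pos : 0 < ln 2.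
Proof. rewrite -ln_1; apply: ln_increasing; lra. Qed.

Section G.
Variable T : Type.
Lemma sum_le (r : seq T) (F G : T -> R) :
  (forall i, F i <= G i) -> \big[Rplus/0]_(i <- r) F i <= \big[Rplus/0]_(i <- r) G i.
Proof. move=> h; apply: (big_ind2 Rle); [lra| move=> *; lra | by []]. Qed.
Lemma sum_ge0 (r : seq T) (Pr : pred T) (F : T -> R) :
  (forall i, 0 <= F i) -> 0 <= \big[Rplus/0]_(i <- r | Pr i) F i.
Proof. move=> h; apply: (big_ind (Rle 0)); [lra| move=> *; lra | by []]. Qed.
Lemma prod_ge0 (r : seq T) (F : T -> R) :
  (forall i, 0 <= F i) -> 0 <= \big[Rmult/1]_(i <- r) F i.
Proof. move=> h; apply: (big_ind (Rle 0)); [lra| move=> *; exact: Rmult_le_pos | by []]. Qed.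
Lemma max_ge (r : seq nat) (F : nat -> R) x0 i : i \in r ->
  F i <= \big[Rmax/x0]_(j <- r) F j.
Proof.
elim: r => // a r IH; rewrite inE big_cons => /orP [/eqP ->|h].
  exact: Rmax_l.
apply: Rle_trans (IH h) _; exact: Rmax_r.
Qed.
End G.

Lemma RplusA : associative Rplus. Proof. by move=> x y z; rewrite Rplus_assoc. Qed.
Lemma RmultA : associative Rmult. Proof. by move=> x y z; rewrite Rmult_assoc. Qed.
HB.instance Definition _ := Monoid.isComLaw.Build R 0 Rplus RplusA Rplus_comm Rplus_0_l.
HB.instance Definition _ := Monoid.isComLaw.Build R 1 Rmult RmultA Rmult_comm Rmult_1_l.
HB.instance Definition _ := Monoid.isMulLaw.Build R 0 Rmult Rmult_0_l Rmult_0_r.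
HB.instance Definition _ := Monoid.isAddLaw.Build R Rmult Rplus Rmult_plus_distr_r Rmult_plus_distr_l.

Section S.
Variable V : finType.

Lemma sum_tuple_cons m (F : seq V -> R) :
  \big[Rplus/0]_(t : m.+1.-tuple V) F t =
  \big[Rplus/0]_(x : V) \big[Rplus/0]_(t : m.-tuple V) F (x :: t).
Proof.
rewrite pair_big /=.
rewrite (reindex (fun p : V * m.-tuple V => [tuple of p.1 :: p.2])) //=.
exists (fun t : m.+1.-tuple V => (thead t, [tuple of behead t])).
  by move=> [x t] _ /=; congr pair; apply: val_inj.
by move=> t _; rewrite [in RHS](tuple_eta t).
Qed.

Lemma sum_tuple_split m1 m2 (F : seq V -> R) :
  \big[Rplus/0]_(t : (m1 + m2).-tuple V) F t =
  \big[Rplus/0]_(t1 : m1.-tuple V) \big[Rplus/0]_(t2 : m2.-tuple V) F (t1 ++ t2).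
Proof.
elim: m1 F => [|m1 IH] F.
  rewrite (big_pred1 [tuple]) /=; last by move=> t; apply/esym/eqP; apply: tuple0.
  by [].
transitivity (\big[Rplus/0]_(x:V) \big[Rplus/0]_(t : (m1+m2).-tuple V) F (x::t)).
  exact: sum_tuple_cons.
rewrite (sum_tuple_cons m1 (fun s => \big[Rplus/0]_(t2 : m2.-tuple V) F (s ++ t2))).
by apply: eq_bigr => x _; rewrite (IH (fun s => F (x :: s))).
Qed.

Lemma sum_tuple_prod m (g : V -> R) :
  \big[Rplus/0]_(t : m.-tuple V) prodP g t = (\big[Rplus/0]_(v : V) g v) ^ m.
Proof.
elim: m => [|m IH].
  rewrite (big_pred1 [tuple]) /=; last by move=> t; apply/esym/eqP; apply: tuple0.
  by rewrite /prodP big_nil.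
rewrite sum_tuple_cons /= -IH big_distrl /=.
apply: eq_bigr => x _; rewrite big_distrr /=.
by apply: eq_bigr => t _; rewrite /prodP big_cons.
Qed.
End S.

Section Main.
Variables (V : finType) (E : {set {set V}}) (P : V -> R) (Parts : {set {set V}}).
Hypothesis hP0 : forall v, 0 <= P v.
Hypothesis hpart : partition Parts (supp P).
Hypothesis hind : forall I, I \in Parts -> independent (induced_edges E (supp P)) I.
Hypothesis hcov : forall A : {set V}, A \subset supp P ->
       A \in induced_edges E (supp P) \/ exists I, I \in Parts /\ A \subset I.

Lemma in_supp x : x \in supp P <-> 0 < P x.
Proof. rewrite /supp inE; by case: Rlt_dec. Qed.

Lemma notin_supp x : x \notin supp P -> P x = 0.
Proof. move=> h; have := hP0 x; have : ~ 0 < P x by move/in_supp; rewrite (negbTE h). lra. Qed.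

Lemma triv : trivIset Parts.
Proof. by case/and3P: hpart. Qed.
Lemma covP : cover Parts = supp P.
Proof. by case/and3P: hpart => /eqP. Qed.

Lemma sub_notE (A I : {set V}) : A \subset I -> I \in Parts -> A \notin E.
Proof.
move=> hAI hI; apply/negP => hA.
have hIs : I \subset supp P by rewrite -covP; apply: bigcup_sup.
have := hind hI hAI; rewrite /induced_edges inE hA /=.
by rewrite (subset_trans hAI hIs).
Qed.

Lemma notE_sub (A : {set V}) : A \subset supp P -> A \notin E -> exists I, I \in Parts /\ A \subset I.
Proof.
move=> hA hE; case: (hcov hA) => // h.
by move: h; rewrite /induced_edges inE (negbTE hE).
Qed.

Lemma prodP_ge0 (F : V -> R) s : (forall v, 0 <= F v) -> 0 <= prodP F s.
Proof. move=> h; exact: prod_ge0. Qed.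

Lemma prodP_zero (F : V -> R) s x : x \in s -> F x = 0 -> prodP F s = 0.
Proof.
elim: s => // a s IH; rewrite inE /prodP big_cons => /orP [/eqP <- ->|h hx].
  by rewrite Rmult_0_l.
by rewrite -/(prodP F s) (IH h hx) Rmult_0_r.
Qed.

Lemma prodP_cat (F : V -> R) s1 s2 : prodP F (s1 ++ s2) = prodP F s1 * prodP F s2.
Proof. by rewrite /prodP big_cat. Qed.

Definition B x0 := pblock Parts x0.
Definition g x0 v := if v \in B x0 then P v else 0.
Definition pp x0 := \big[Rplus/0]_(v : V) g x0 v.

Lemma g_ge0 x0 v : 0 <= g x0 v.
Proof. rewrite /g; case: ifP => _; [exact: hP0| lra]. Qed.

Lemma B_in x0 : x0 \in supp P -> B x0 \in Parts.
Proof. by move=> h; apply: pblock_mem; rewrite covP. Qed.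

Lemma Qlow x0 n : x0 \in supp P ->
  pp x0 ^ n <= \big[Rplus/0]_(t : n.-tuple V | sigma t \notin E) prodP P t.
Proof.
move=> hx0; rewrite -sum_tuple_prod [in X in _ <= X]big_mkcond [in X in X <= _]big_mkcond; apply: sum_le => t /=.
case: (boolP (all (mem (B x0)) t)) => [/allP hall | /allPn [x hx hxB]].
  have hs : sigma t \subset B x0 by apply/subsetP => x; rewrite inE => /hall.
  rewrite (sub_notE hs (B_in hx0)).
  right; apply: eq_big_seq => x /hall /= hx; by rewrite /g hx.
rewrite (prodP_zero (x := x)) //; last by rewrite /g; case: ifP => // h; case/negP: hxB.
case: ifP => _; [exact: prodP_ge0 | lra].
Qed.

Lemma flow x0 (s1 : seq V) n : x0 \in s1 -> (forall x, x \in s1 -> x \in supp P) ->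
  \big[Rplus/0]_(t : n.-tuple V | sigma (s1 ++ t) \notin E) prodP P t <= pp x0 ^ n.
Proof.
move=> hx0 hs1; rewrite -sum_tuple_prod [in X in _ <= X]big_mkcond [in X in X <= _]big_mkcond; apply: sum_le => t /=.
case: ifP => hC; last exact: prodP_ge0 (@g_ge0 x0).
case: (boolP (all (mem (supp P)) t)) => [/allP hall | /allPn [x hx hxB]].
  have hs : sigma (s1 ++ t) \subset supp P.
    by apply/subsetP => x; rewrite inE mem_cat => /orP [/hs1 | /hall].
  have [I [hI hsI]] := notE_sub hs hC.
  have hx0I : x0 \in I by apply: (subsetP hsI); rewrite inE mem_cat hx0.
  have hB : B x0 = I by apply: def_pblock => //; exact: triv.
  right; apply: eq_big_seq => x hx /=.
  have : x \in I by apply: (subsetP hsI); rewrite inE mem_cat hx orbT.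
  by rewrite /g hB => ->.
rewrite (prodP_zero (x := x)) //; last exact: notin_supp.
exact: prodP_ge0 (@g_ge0 x0).
Qed.

Lemma sum_ge_term (T : finType) (F : T -> R) i : (forall j, 0 <= F j) ->
  F i <= \big[Rplus/0]_(j : T) F j.
Proof. move=> h; rewrite (bigD1 i) //=; have := sum_ge0 (index_enum T) (fun j => j != i) h; lra. Qed.

Definition Q n := \big[Rplus/0]_(t : n.-tuple V | sigma t \notin E) prodP P t.
Definition f k (t1 : seq V) :=
  \big[Rplus/0]_(t2 : k.-tuple V | sigma (t1 ++ t2) \notin E) prodP P t2.
Definition S l k := \big[Rplus/0]_(t1 : l.-tuple V) (prodP P t1 * f k t1 ^ 2).

Lemma Qsplit l k : Q (l + k) = \big[Rplus/0]_(t1 : l.-tuple V) (prodP P t1 * f k t1).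
Proof.
rewrite /Q big_mkcond (sum_tuple_split l k (fun s => if sigma s \notin E then prodP P s else 0)).
apply: eq_bigr => t1 _; rewrite /f big_distrr [in RHS]big_mkcond; apply: eq_bigr => t2 _ /=.
by rewrite prodP_cat; case: ifP; rewrite ?Rmult_0_r.
Qed.

Lemma pp_pos x0 : x0 \in supp P -> 0 < pp x0.
Proof.
move=> hx; have hB : x0 \in B x0 by rewrite /B mem_pblock covP.
apply: Rlt_le_trans (sum_ge_term x0 (@g_ge0 x0)).
by rewrite /g hB; apply/in_supp.
Qed.

Lemma Q_pos x0 n : x0 \in supp P -> 0 < Q n.
Proof. move=> hx; apply: Rlt_le_trans (Qlow n hx); apply: pow_lt; exact: pp_pos. Qed.

Lemma f_ge0 k s : 0 <= f k s.
Proof. apply: sum_ge0 => t; exact: prodP_ge0. Qed.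

Lemma pp_le_M x0 n k : x0 \in supp P -> (0 < n)%N ->
  pp x0 ^ k <= exp (INR k * ln (Q n) / INR n).
Proof.
move=> hx hn; have hp := pp_pos hx.
have hQ := Q_pos n hx.
have h1 : INR n * ln (pp x0) <= ln (Q n).
  rewrite -ln_pow //; apply: ln_le'; [exact: pow_lt | exact: Qlow].
have hn' : 0 < INR n by apply: lt_0_INR; apply/ltP.
rewrite -(exp_ln (pp x0 ^ k)); last exact: pow_lt.
apply: exp_le'; rewrite ln_pow //.
have hk := pos_INR k.
have -> : INR k * ln (Q n) / INR n = INR k * (ln (Q n) / INR n) by rewrite /Rdiv Rmult_assoc.
apply: Rmult_le_compat_l => //.
apply: (Rmult_le_reg_l (INR n)) => //.
have -> : INR n * (ln (Q n) / INR n) = ln (Q n) by field; lra.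
exact: h1.
Qed.

Lemma S_le l k : (0 < l)%N ->
  S l k <= exp (INR k * ln (Q (l + k)) / INR (l + k)) * Q (l + k).
Proof.
move=> hl.
rewrite [X in _ <= _ * X]Qsplit big_distrr /S; apply: sum_le => t1 /=.
have hf := f_ge0 k t1.
case: (boolP (all (mem (supp P)) t1)) => [/allP hall | /allPn [x hx hxB]]; last first.
  rewrite (prodP_zero (x := x)) //; last exact: notin_supp.
  rewrite !Rmult_0_l Rmult_0_r; lra.
case: l hl t1 hall hf => // l _ t1 hall hf.
have hx0 : thead t1 \in t1 by rewrite mem_tnth.
have h1 := flow k hx0 hall.
have h2 := pp_le_M k (hall _ hx0) (isT : (0 < l.+1 + k)%N).
have hP := prodP_ge0 t1 hP0.
set M := exp _ in h2 *.
have hfM : f k t1 <= M by apply: (Rle_trans _ _ _ h1).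
have h3 : 0 <= prodP P t1 * f k t1 by apply: Rmult_le_pos.
have := Rmult_le_compat_l _ _ _ h3 hfM.
rewrite /= -/(f k t1); nra.
Qed.

Lemma S_pos l k x0 : (0 < l)%N -> x0 \in supp P -> 0 < S l k.
Proof.
move=> hl hx.
have hQ := Q_pos (l + k) hx.
have [t1 ht1] : exists t1 : l.-tuple V, 0 < prodP P t1 * f k t1.
  apply: NNPP => hn.
  have : Q (l + k) <= \big[Rplus/0]_(t : l.-tuple V) 0.
    rewrite Qsplit; apply: sum_le => t; apply: Rnot_lt_le => h; apply: hn; by exists t.
  rewrite big1_eq; lra.
apply: Rlt_le_trans (sum_ge_term t1 _); last first.
  move=> t; apply: Rmult_le_pos; [exact: prodP_ge0 | apply: pow_le; exact: f_ge0].
have hP := prodP_ge0 t1 hP0; have hf := f_ge0 k t1.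
have hf0 : 0 < f k t1.
  case: hf => // h; rewrite -h Rmult_0_r in ht1; lra.
rewrite /=; nra.
Qed.

Lemma arith (a b c Ln l k : R) : 0 < c -> 0 < l -> 0 < Ln -> k = Ln + 1 - l ->
  b <= k * a / (Ln + 1) + a ->
  1 / l * (2 * (- (1 / Ln) * (a / c)) + 1 / Ln * (b / c)) <=
  1 / (Ln + 1) * (- (1 / Ln) * (a / c)).
Proof.
move=> hc hl hL hk hb.
have hb' : (Ln + 1) * b <= (k + (Ln + 1)) * a.
  have e : (Ln + 1) * (k * a / (Ln + 1) + a) = (k + (Ln + 1)) * a by field; lra.
  rewrite -e; apply: Rmult_le_compat_l; lra.
have e : 1 / l * (2 * (- (1 / Ln) * (a / c)) + 1 / Ln * (b / c)) -
  1 / (Ln + 1) * (- (1 / Ln) * (a / c)) =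
  ((Ln + 1) * b - (k + (Ln + 1)) * a) / (l * Ln * (Ln + 1) * c).
  rewrite hk; field; repeat split; lra.
have : ((Ln + 1) * b - (k + (Ln + 1)) * a) / (l * Ln * (Ln + 1) * c) <= 0.
  have hi : 0 < / (l * Ln * (Ln + 1) * c).
    apply: Rinv_0_lt_compat; repeat apply: Rmult_lt_0_compat; lra.
  rewrite /Rdiv; nra.
lra.
Qed.

Lemma per_l L l x0 : (1 <= L)%N -> x0 \in supp P -> (1 <= l <= L.+1)%N ->
  1 / INR l * theta E P L l <= 1 / INR L.+1 * I_L1 E P L.
Proof.
move=> hL hx /andP [hl1 hl2]; rewrite /theta.
case: eqP => [->|hne]; first exact: Rle_refl.
set k := (L.+1 - l)%N.
have hn : (l + k)%N = L.+1 by rewrite /k subnKC.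
change (1 / INR l * (2 * (- (1 / INR L) * log2 (Q L.+1)) + 1 / INR L * log2 (S l k))
   <= 1 / INR L.+1 * (- (1 / INR L) * log2 (Q L.+1))).
rewrite /log2 S_INR.
have hQ := Q_pos L.+1 hx.
have hS := S_pos k hl1 hx.
have hSle := S_le k hl1; rewrite hn in hSle.
have hkINR : INR k = INR L + 1 - INR l.
  have : INR (l + k)%N = INR l + INR k by apply: plus_INR.
  rewrite hn S_INR; lra.
apply: (arith ln2_pos _ _ hkINR).
- apply: lt_0_INR; apply/ltP; exact: hl1.
- apply: lt_0_INR; apply/ltP; exact: hL.
have hM : 0 < exp (INR k * ln (Q L.+1) / INR L.+1) by apply: exp_pos.
have := ln_le' hS hSle.
rewrite ln_mult // ln_exp S_INR; lra.
Qed.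

End Main.

Unset Implicit Arguments.

Theorem mainTheorem8 (V : finType) (E : {set {set V}}) (P : V -> R) (L : nat) :
  is_hypergraph E ->
  is_pmf P ->
  (1 <= L)%N ->
  complete_multipartite (supp P) (induced_edges E (supp P)) ->
  max_over_L1 L (fun l => (1 / INR l) * theta E P L l)
  = (1 / INR L.+1) * I_L1 E P L.
Proof.
move=> hE [hP0 hsum] hL [Parts [hpart [hind hcov]]].
have [x0 hx] : exists x0, x0 \in supp P.
  apply: NNPP => hn.
  have h0 : forall v, P v = 0.
    move=> v; apply: notin_supp => //; apply/negP => hv; apply: hn; by exists v.
  move: hsum; rewrite big1 //; lra.
have hper := per_l hP0 hpart hind hcov hL hx.
rewrite /max_over_L1.
apply: Rle_antisym.
  rewrite big_seq; apply: (big_ind (fun x => x <= _)).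
  - by apply: hper.
  - by move=> a b ha hb; apply: Rmax_lub.
  - by move=> i; rewrite mem_index_iota => hi; apply: hper.
have -> : 1 / INR L.+1 * I_L1 E P L = 1 / INR L.+1 * theta E P L L.+1 by rewrite /theta eqxx.
apply: (max_ge (fun l => 1 / INR l * theta E P L l)).
by rewrite mem_index_iota ltnSn.
Qed.
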